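(* For any graph $G$ on $n\ge1$ vertices and any $\lambda>0$, \[ \frac{\alpha(G)}{\overline\alpha_G(\lambda)}\;\ge\;1+\frac{\alpha(G)}{\lambda n}, \] or equivalently $P_G(\lambda)\ge\left(\frac{\lambda}{\alpha(G)}+\frac1n\right)P_G'(\lambda)$. Equality holds when $G$ is a disjoint union of copies of $K_r$, for any $r\ge1$.
   Context: $\alpha(G)$ is the maximum size of an independent set of $G$. $P_G(\lambda)=\sum_J\lambda^{|J|}$ over all independent sets $J$ of $G$ (including the empty set), and $\overline\alpha_G(\lambda)=\lambda P_G'(\lambda)/P_G(\lambda)$ is the expected size of an independent set drawn from the hard-core model $\Pr[J]=\lambda^{|J|}/P_G(\lambda)$. $K_r$ is the complete graph on $r$ vertices. *)

(* Defs.v *)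
From HB Require Import structures.
From mathcomp Require Import all_boot all_order all_algebra.
Set Implicit Arguments. Unset Strict Implicit. Unset Printing Implicit Defensive.
Import Order.TTheory GRing.Theory Num.Theory.

Definition simple_graph (T : finType) (e : rel T) : Prop :=
  symmetric e /\ irreflexive e.

Definition independent (T : finType) (e : rel T) (J : {set T}) : bool :=
  [forall x in J, forall y in J, ~~ e x y].

Definition indep_num (T : finType) (e : rel T) : nat :=
  \max_(J : {set T} | independent e J) #|J|.

Local Open Scope ring_scope.

Definition indep_poly (R : nzRingType) (T : finType) (e : rel T) : {poly R} :=
  \sum_(J : {set T} | independent e J) 'X^#|J|.

(* Expected size of an independent set in the hard-core model:
   lambda P_G'(lambda) / P_G(lambda). *)
Definition avg_indep (R : fieldType) (T : finType) (e : rel T) (lam : R) : R :=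
  lam * (indep_poly R e)^`().[lam] / (indep_poly R e).[lam].

Definition disjoint_union_of_K (T : finType) (e : rel T) (r : nat) : Prop :=
  exists (m : nat) (f : T -> 'I_m),
    (forall x y, e x y = (x != y) && (f x == f y)) /\
    (forall x, #|[set y | f y == f x]| = r).

(* Main.v *)
Require Import Defs.
From HB Require Import structures.
From mathcomp Require Import all_boot all_order all_algebra.
From mathcomp Require Import ring lra.
Import Order.TTheory GRing.Theory Num.Theory.
Set Implicit Arguments. Unset Strict Implicit. Unset Printing Implicit Defensive.

Local Open Scope ring_scope.
Lemma CS (R : realFieldType) (I : finType) (P : pred I) (w a : I -> R) :
  (forall i, 0 <= w i) ->
  (\sum_(i | P i) w i * a i) ^+ 2 <= (\sum_(i | P i) w i) * (\sum_(i | P i) w i * a i ^+ 2).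
Proof.
move=> w0.
set X := \sum_(i | P i) w i; set Y := \sum_(i | P i) w i * a i ^+ 2; set Z := \sum_(i | P i) w i * a i.
have H : 0 <= \sum_(i | P i) \sum_(j | P j) w i * w j * (a i - a j) ^+ 2.
  by apply: sumr_ge0 => i _; apply: sumr_ge0 => j _; rewrite mulr_ge0 ?sqr_ge0 ?mulr_ge0.
have E : \sum_(i | P i) \sum_(j | P j) w i * w j * (a i - a j) ^+ 2 = 2 * (X * Y - Z ^+ 2).
  transitivity (\sum_(i | P i) (w i * a i ^+ 2 * X + w i * Y + (-2) * (w i * a i * Z))).
    apply: eq_bigr => i _; rewrite /X /Y /Z !mulr_sumr -!big_split /=.
    by apply: eq_bigr => j _; ring.
  rewrite !big_split /= -!mulr_sumr -!mulr_suml /X /Y /Z -/X -/Y -/Z; ring.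
rewrite E in H; nra.
Qed.

Lemma eqle (R : realFieldType) (x y : R) : x = y -> x <= y.
Proof. by move=> ->. Qed.

Lemma arith (R : realFieldType) (n al k m m1 A A1 B : R) :
  0 <= m -> 0 <= m1 -> 0 <= k -> k <= al -> 0 <= n ->
  n * (k + 1) * m1 <= al * A1 -> (k + 1) * m1 = n * m - A ->
  k * A1 <= n * A - B -> A ^+ 2 <= m * B -> n * k * m <= al * A.
Proof.
move=> m0 m10 k0 kal n0 IH E1 E2 CS.
have D0 : 0 <= n * m - A by rewrite -E1 mulr_ge0 // ?addr_ge0.
have al0 : 0 <= al by apply: le_trans kal.
have H1 : n * (n * m - A) <= al * A1 by rewrite -E1 mulrA.
have H2 : n * k * m * (n * m - A) <= al * A * (n * m - A).
  have a : n * k * m * (n * m - A) <= al * A1 * (k * m).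
    have := ler_wpM2r (mulr_ge0 k0 m0) H1; by move=> h; apply: le_trans h; rewrite le_eqVlt; apply/orP; left; apply/eqP; ring.
  apply: (le_trans a).
  have b : al * A1 * (k * m) <= al * m * (n * A - B).
    have := ler_wpM2l (mulr_ge0 al0 m0) E2; move=> h; apply: le_trans h; rewrite le_eqVlt; apply/orP; left; apply/eqP; ring.
  apply: (le_trans b).
  have c : al * (m * B) >= al * A ^+ 2 by apply: ler_wpM2l.
  nra.
case: (eqVneq (n * m - A) 0) => [D00|Dn].
  have -> : A = n * m by apply/eqP; rewrite eq_sym -subr_eq0 D00.
  rewrite -subr_ge0; have -> : al * (n * m) - n * k * m = n * m * (al - k) by ring.
  by rewrite !mulr_ge0 // subr_ge0.
have Dp : 0 < n * m - A by rewrite lt_def Dn D0.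
by move: H2; rewrite ler_pM2r.
Qed.
Close Scope ring_scope.
Section G.
Variables (T : finType) (e : rel T).
Hypothesis HG : simple_graph e.

Definition Nb (J : {set T}) : {set T} := [set v | [exists u in J, (u == v) || e u v]].

Lemma indepP (J : {set T}) :
  reflect (forall x y, x \in J -> y \in J -> ~~ e x y) (independent e J).
Proof.
apply: (iffP forall_inP) => [H x y xJ yJ | H x xJ].
  by move/forall_inP: (H x xJ) => /(_ y yJ).
by apply/forall_inP => y yJ; apply: H.
Qed.

Lemma NbP (J : {set T}) v :
  reflect (exists2 u, u \in J & (u == v) || e u v) (v \in Nb J).
Proof. rewrite inE; exact: exists_inP. Qed.

Lemma ext_iff (J : {set T}) w :
  independent e (w |: J) && (w \in w |: J) && (((w |: J) :\ w, w) == (J, w))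
  = independent e J && (w \notin Nb J).
Proof.
case: HG => Hs Hi.
apply/idP/idP.
  case/andP => [/andP [HI _] /eqP [HE]].
  have wJ : w \notin J.
    by move: HE => /setP /(_ w); rewrite !inE eqxx /= => <-.
  apply/andP; split.
    apply/indepP => x y xJ yJ; move/indepP: HI; apply; by rewrite inE ?xJ ?yJ orbT.
  apply/negP => /NbP [u uJ /orP [/eqP uw | euw]].
    by rewrite -uw uJ in wJ.
  by move/indepP: HI => /(_ u w); rewrite !inE uJ eqxx orbT euw => /(_ isT isT).
case/andP => HJ wN.
have wJ : w \notin J by apply: contra wN => wJ; apply/NbP; exists w; rewrite ?eqxx.
rewrite setU11 andbT setU1K // eqxx andbT.
apply/indepP => x y; rewrite !inE => /orP [/eqP -> | xJ] /orP [/eqP -> | yJ].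
- by rewrite Hi.
- rewrite Hs; apply: contra wN => ey; apply/NbP; exists y => //; by rewrite ey orbT.
- apply: contra wN => ey; apply/NbP; exists x => //; by rewrite ey orbT.
- by move/indepP: HJ; apply.
Qed.


Lemma dom (I : {set T}) :
  (#|I|.-1 * #|Nb I| <= \sum_(u in I) #|Nb (I :\ u)|)%N.
Proof.
pose S v := [set u in I | v \in Nb (I :\ u)].
have E : \sum_(u in I) #|Nb (I :\ u)| = \sum_v #|S v|.
  transitivity (\sum_(u in I) \sum_v (if v \in Nb (I :\ u) then 1 else 0))%N.
    by apply: eq_bigr => u _; rewrite -sum1_card big_mkcond.
  rewrite exchange_big /=; apply: eq_bigr => v _.
  rewrite -sum1_card [RHS]big_mkcond [LHS]big_mkcond /=; apply: eq_bigr => u _.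
  by rewrite !inE; case: (u \in I).
rewrite E mulnC -sum_nat_const.
rewrite [X in (X <= _)%N]big_mkcond /=.
apply: leq_sum => v _; case: ifP => // /NbP [u0 u0I dom0].
rewrite (cardsD1 u0 I) u0I add1n /=.
apply: subset_leq_card; apply/subsetP => u; rewrite !inE => /andP [uu0 uI].
rewrite uI /=; apply/existsP; exists u0; by rewrite !inE eq_sym uu0 u0I.
Qed.

Local Open Scope ring_scope.
Lemma DC (R : nzRingType) (F : {set T} -> R) :
  \sum_(I | independent e I) \sum_(u in I) F (I :\ u)
  = \sum_(J | independent e J) #|~: Nb J|%:R * F J.
Proof.
transitivity (\sum_(J | independent e J) \sum_(w in ~: Nb J) F J); last first.
  by apply: eq_bigr => J _; rewrite sumr_const mulr_natl.
rewrite !pair_big_dep.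
rewrite (reindex_onto (fun p : {set T} * T => (p.2 |: p.1, p.2))
                      (fun p : {set T} * T => (p.1 :\ p.2, p.2))) /=; last first.
  by move=> [I u] /= /andP [_ uI]; rewrite setD1K.
apply: eq_big => [[J w]|[J w]] /=; first by rewrite ext_iff in_setC.
by rewrite ext_iff => /andP [_ wN]; rewrite setU1K //; apply: contra wN => wJ; apply/NbP; exists w; rewrite ?eqxx.
Qed.

Lemma card_rem (I : {set T}) u : u \in I -> #|I :\ u| = #|I|.-1.
Proof. by move=> uI; rewrite (cardsD1 u I) uI. Qed.

Lemma le_alpha (J : {set T}) : independent e J -> (#|J| <= indep_num e)%N.
Proof. move=> HJ; exact: (@leq_bigmax_cond _ (independent e) (fun J : {set T} => #|J|) J HJ). Qed.

Lemma top (J : {set T}) : independent e J -> #|J| = indep_num e -> Nb J = setT.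
Proof.
move=> HJ hJ; apply/setP => v; rewrite in_setT; apply: contraT => vN.
have := ext_iff J v; rewrite HJ vN /= => /andP [/andP [Hv _] _].
have := le_alpha Hv; rewrite cardsU1 hJ.
have -> : v \notin J by apply: contra vN => vJ; apply/NbP; exists v; rewrite ?eqxx.
by rewrite add1n ltnn.
Qed.

Variable R : realFieldType.
Definition ind k (J : {set T}) : R := (#|J| == k)%:R.
Definition mm k : R := \sum_(J | independent e J) ind k J.
Definition AA k : R := \sum_(J | independent e J) ind k J * #|Nb J|%:R.
Definition BB k : R := \sum_(J | independent e J) ind k J * #|Nb J|%:R ^+ 2.
Definition nn : R := #|T|%:R.

Lemma ind_rem k (I : {set T}) u : u \in I -> ind k (I :\ u) = ind k.+1 I.
Proof.
move=> uI; rewrite /ind card_rem //.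
have : (0 < #|I|)%N by apply/card_gt0P; exists u.
by case: #|I|.
Qed.

Lemma ind01 k J : ind k J = 0 \/ (ind k J = 1 /\ #|J| = k).
Proof. rewrite /ind; case: eqP => [->|_]; by [right | left]. Qed.

Lemma ind_ge0 k J : 0 <= ind k J.
Proof. by rewrite /ind ler0n. Qed.

Lemma compl_card J : #|~: Nb J|%:R = nn - #|Nb J|%:R :> R.
Proof. by rewrite /nn -(cardsC (Nb J)) natrD addrAC subrr add0r. Qed.

Lemma E1 k : k.+1%:R * mm k.+1 = nn * mm k - AA k.
Proof.
transitivity (\sum_(I | independent e I) \sum_(u in I) ind k (I :\ u)).
  rewrite /mm mulr_sumr; apply: eq_bigr => I _.
  rewrite (eq_bigr (fun _ => ind k.+1 I)); last by move=> u uI; rewrite ind_rem.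
  rewrite sumr_const; case: (ind01 k.+1 I) => [->|[-> ->]]; by rewrite ?mul0rn ?mulr0 ?mulr1.
rewrite (DC (ind k)) /mm /AA mulr_sumr -sumrB; apply: eq_bigr => J _.
by rewrite compl_card; ring.
Qed.

Lemma E2 k : k%:R * AA k.+1 <= nn * AA k - BB k.
Proof.
apply: (@le_trans _ _ (\sum_(I | independent e I) \sum_(u in I) (ind k (I :\ u) * #|Nb (I :\ u)|%:R))).
  rewrite /AA mulr_sumr; apply: ler_sum => I _.
  rewrite (eq_bigr (fun u => ind k.+1 I * #|Nb (I :\ u)|%:R)); last by move=> u uI; rewrite ind_rem.
  rewrite -mulr_sumr; case: (ind01 k.+1 I) => [->|[-> hI]]; first by rewrite !mul0r mulr0.
  rewrite !mul1r -natr_sum -natrM ler_nat; have := dom I; by rewrite hI.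
rewrite (DC (fun J => ind k J * #|Nb J|%:R)) /AA /BB mulr_sumr -sumrB le_eqVlt; apply/orP; left; apply/eqP; apply: eq_bigr => J _.
by rewrite compl_card; ring.
Qed.

Lemma CSk k : AA k ^+ 2 <= mm k * BB k.
Proof. by apply: CS => J; exact: ind_ge0. Qed.

Lemma mm_ge0 k : 0 <= mm k.
Proof. by apply: sumr_ge0 => J _; exact: ind_ge0. Qed.
Lemma AA_ge0 k : 0 <= AA k.
Proof. by apply: sumr_ge0 => J _; rewrite mulr_ge0 ?ind_ge0 ?ler0n. Qed.

Lemma AAtop : AA (indep_num e) = nn * mm (indep_num e).
Proof.
rewrite /AA /mm mulr_sumr; apply: eq_bigr => J HJ.
case: (ind01 (indep_num e) J) => [->|[-> hJ]]; first by rewrite mul0r mulr0.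
by rewrite top // cardsT mulr1 mul1r.
Qed.

Lemma big_zero k : (indep_num e < k)%N -> mm k = 0 /\ AA k = 0.
Proof.
move=> hk; have H : forall J, independent e J -> ind k J = 0.
  move=> J HJ; case: (ind01 k J) => [//|[_ hJ]].
  by have := le_alpha HJ; rewrite hJ leqNgt hk.
by split; apply: big1 => J HJ; rewrite H ?mul0r.
Qed.


Lemma key_down j : (j <= indep_num e)%N ->
  nn * (indep_num e - j)%N%:R * mm (indep_num e - j)%N <= (indep_num e)%:R * AA (indep_num e - j)%N.
Proof.
elim: j => [_|j IH hj].
  by rewrite subn0 AAtop; apply: eqle; ring.
have hk : (j < indep_num e)%N by [].
have E := subnSK hk.
move: (IH (ltnW hj)); rewrite -E => IH'.
apply: (arith (m1 := mm (indep_num e - j.+1)%N.+1) (A1 := AA (indep_num e - j.+1)%N.+1) (B := BB (indep_num e - j.+1)%N)).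
- exact: mm_ge0.
- exact: mm_ge0.
- exact: ler0n.
- by rewrite ler_nat leq_subr.
- exact: ler0n.
- by move: IH'; rewrite -natr1.
- by rewrite -E1 natr1.
- exact: E2.
- exact: CSk.
Qed.

Lemma key k : nn * k%:R * mm k <= (indep_num e)%:R * AA k.
Proof.
case: (leqP k (indep_num e)) => hk.
  by have := key_down (leq_subr k (indep_num e)); rewrite subKn.
by case: (big_zero hk) => -> ->; rewrite !mulr0.
Qed.


Lemma grade (F : {set T} -> R) :
  \sum_(J | independent e J) F J
  = \sum_(k < #|T|.+1) \sum_(J | independent e J) ind k J * F J.
Proof.
rewrite exchange_big /=; apply: eq_bigr => J _; rewrite -mulr_suml.
suff -> : \sum_(k < #|T|.+1) ind k J = 1 by rewrite mul1r.
have hJ : (#|J| < #|T|.+1)%N by rewrite ltnS max_card.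
rewrite (bigD1 (Ordinal hJ)) //= /ind eqxx big1 ?addr0 // => k hk.
case: eqP => // E; by move: hk; rewrite -(inj_eq val_inj) /= E eqxx.
Qed.

Lemma level (lam : R) k :
  \sum_(J | independent e J) ind k J * (lam ^+ #|J|.+1 * ((indep_num e)%:R * #|Nb J|%:R - nn * #|J|%:R))
  = lam ^+ k.+1 * ((indep_num e)%:R * AA k - nn * k%:R * mm k).
Proof.
rewrite /AA /mm !mulr_sumr -sumrB mulr_sumr; apply: eq_bigr => J _.
by case: (ind01 k J) => [->|[-> ->]]; ring.
Qed.

Lemma S_ge0 (lam : R) : 0 <= lam ->
  0 <= \sum_(J | independent e J) lam ^+ #|J|.+1 * ((indep_num e)%:R * #|Nb J|%:R - nn * #|J|%:R).
Proof.
move=> l0; rewrite grade; apply: sumr_ge0 => k _; rewrite level.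
by rewrite mulr_ge0 ?exprn_ge0 // subr_ge0 key.
Qed.


Lemma clique_nb r : disjoint_union_of_K e r ->
  forall J, independent e J -> #|Nb J| = (r * #|J|)%N.
Proof.
move=> [m [f [Hf Hr]]] J HJ.
have NbE : forall v, (v \in Nb J) = [exists u in J, f u == f v].
  move=> v; rewrite inE; apply/exists_inP/exists_inP.
    move=> [u uJ H]; exists u => //.
    by case/orP: H => [/eqP -> | ]; rewrite ?eqxx // Hf => /andP [].
  move=> [u uJ fu]; exists u => //.
  by rewrite Hf fu andbT orbN.
have C : forall v, #|[set u in J | f u == f v]| = (v \in Nb J).
  move=> v; rewrite NbE; case: exists_inP => [[u0 u0J fu0]|Hn].
    apply/eqP; rewrite eqn_leq; apply/andP; split.
      apply/card_le1_eqP => x y; rewrite !inE => /andP [xJ fx] /andP [yJ fy].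
      apply/eqP; apply: contraT => xy; move/indepP: HJ => /(_ x y xJ yJ).
      by rewrite Hf eq_sym xy (eqP fx) (eqP fy) eqxx.
    by apply/card_gt0P; exists u0; rewrite inE u0J fu0.
  apply/eqP; rewrite cards_eq0; apply/eqP/setP => u; rewrite !inE.
  by apply/negbTE/andP => [[uJ fu]]; apply: Hn; exists u.
transitivity (\sum_v (v \in Nb J) : nat)%N.
  by rewrite -sum1_card big_mkcond; apply: eq_bigr => v _; case: (v \in Nb J).
transitivity (\sum_(u in J) \sum_v (if f v == f u then 1 else 0))%N; last first.
  rewrite mulnC -sum_nat_const; apply: eq_bigr => u _.
  by rewrite -(Hr u) -sum1_card [RHS]big_mkcond; apply: eq_bigr => v _; rewrite inE.
rewrite exchange_big /=; apply: eq_bigr => v _.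
rewrite -C -sum1_card [RHS]big_mkcond [LHS]big_mkcond /=; apply: eq_bigr => u _.
by rewrite !inE eq_sym; case: (u \in J).
Qed.

Lemma max_exists : exists2 J0, independent e J0 & #|J0| = indep_num e.
Proof.
have P0 : independent e set0 by apply/indepP => x y; rewrite inE.
exists [arg max_(J > set0 | independent e J) #|J|].
  by case: arg_maxnP.
by rewrite /indep_num (bigop.bigmax_eq_arg set0 P0).
Qed.


Lemma Nb0 : Nb set0 = set0.
Proof. by apply/setP => v; rewrite !inE; apply/exists_inP => [[u]]; rewrite inE. Qed.

Lemma P0 : independent e set0.
Proof. by apply/indepP => x y; rewrite inE. Qed.

Lemma final (Hn : (1 <= #|T|)%N) (lam : R) (Hlam : 0 < lam) :
  1 + (indep_num e)%:R / (lam * #|T|%:R)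
    <= (indep_num e)%:R / avg_indep e lam
  /\
  ((exists r : nat, (1 <= r)%N /\ disjoint_union_of_K e r) ->
    (indep_num e)%:R / avg_indep e lam
      = 1 + (indep_num e)%:R / (lam * #|T|%:R)).
Proof.
set al := (indep_num e)%:R.
set P := indep_poly R e.
have hp : P.[lam] = \sum_(J | independent e J) lam ^+ #|J|.
  by rewrite /P /indep_poly horner_sum; apply: eq_bigr => J _; rewrite hornerXn.
have hd : lam * P^`().[lam] = \sum_(J | independent e J) #|J|%:R * lam ^+ #|J|.
  rewrite /P /indep_poly raddf_sum horner_sum mulr_sumr; apply: eq_bigr => J _.
  rewrite [X in X.[lam]]/= derivXn hornerMn hornerXn; case: #|J| => [|k] /=; first by rewrite mulr0n mulr0 mul0r.
  by rewrite -mulr_natl exprS; ring.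
have hD : lam * P^`().[lam] = \sum_(J | independent e J) (nn - #|Nb J|%:R) * lam ^+ #|J|.+1.
  rewrite hd.
  transitivity (\sum_(I | independent e I) \sum_(u in I) lam ^+ (#|I :\ u|.+1)).
    apply: eq_bigr => I _.
    rewrite (eq_bigr (fun _ => lam ^+ #|I|)); last first.
      move=> u uI; rewrite card_rem // prednK //; apply/card_gt0P; by exists u.
    by rewrite sumr_const mulr_natl.
  by rewrite (DC (fun J => lam ^+ #|J|.+1)); apply: eq_bigr => J _; rewrite compl_card.
set p := P.[lam]; set D := lam * P^`().[lam].
have e1 : lam * p = \sum_(J | independent e J) lam ^+ #|J|.+1.
  by rewrite /p hp mulr_sumr; apply: eq_bigr => J _; rewrite exprS.
have e2 : lam * D = \sum_(J | independent e J) #|J|%:R * lam ^+ #|J|.+1.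
  by rewrite /D hd mulr_sumr; apply: eq_bigr => J _; rewrite exprS; ring.
have Kdef : al * nn * (lam * p) - nn * (lam * D) - al * D
    = \sum_(J | independent e J) lam ^+ #|J|.+1 * ((indep_num e)%:R * #|Nb J|%:R - nn * #|J|%:R).
  rewrite e1 e2 /D hD !mulr_sumr -!sumrB; apply: eq_bigr => J _; rewrite /al; ring.
have n0 : 0 < nn by rewrite /nn ltr0n.
have p0 : 0 < p.
  rewrite /p hp (bigD1 set0) ?P0 //= cards0 expr0.
  have : 0 <= \sum_(J | independent e J && (J != set0)) lam ^+ #|J|.
    by apply: sumr_ge0 => J _; rewrite exprn_ge0 // ltW.
  lra.
have D0 : 0 < D.
  rewrite /D hD (bigD1 set0) ?P0 //= Nb0 cards0 subr0 expr1.
  have : 0 <= \sum_(J | independent e J && (J != set0)) (nn - #|Nb J|%:R) * lam ^+ #|J|.+1.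
    by apply: sumr_ge0 => J _; rewrite -compl_card mulr_ge0 ?ler0n // exprn_ge0 // ltW.
  have : 0 < nn * lam by rewrite mulr_gt0.
  lra.
have Hfin : al / avg_indep e lam - (1 + al / (lam * nn))
   = (al * nn * (lam * p) - nn * (lam * D) - al * D) / (lam * nn * D).
  rewrite /avg_indep -/P -/p -/D.
  field.
  by rewrite !gt_eqF // ?mulr_gt0.
rewrite -[#|T|%:R]/nn; split.
  rewrite -subr_ge0 Hfin; apply: divr_ge0; first by rewrite Kdef; apply: S_ge0; apply: ltW.
  by apply: ltW; apply: mulr_gt0 => //; apply: mulr_gt0.
move=> [r [_ Hr]]; apply/eqP; rewrite -subr_eq0 Hfin Kdef.
have [J0 HJ0 hJ0] := max_exists.
have hn : nn = (r * indep_num e)%:R.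
  by rewrite /nn -cardsT -(top HJ0 hJ0) (clique_nb Hr HJ0) hJ0.
rewrite big1 ?mul0r // => J HJ; rewrite (clique_nb Hr HJ) hn !natrM; ring.
Qed.

End G.

Local Open Scope ring_scope.

Theorem theorem5p6 (R : realFieldType) (T : finType) (e : rel T)
    (HG : simple_graph e) (Hn : (1 <= #|T|)%N) (lam : R) (Hlam : 0 < lam) :
  1 + (indep_num e)%:R / (lam * #|T|%:R)
    <= (indep_num e)%:R / avg_indep e lam
  /\
  ((exists r : nat, (1 <= r)%N /\ disjoint_union_of_K e r) ->
    (indep_num e)%:R / avg_indep e lam
      = 1 + (indep_num e)%:R / (lam * #|T|%:R)).
Proof. by apply: final. Qed.
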